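(* For all positive integers $n,p$, $$\beta^*(n,p,\infty)=\Omega\left(n^{2/3}p^{2/3}+n+p\right).$$
   Context: A path system is a pair $S=(V,\Pi)$ where $V$ is a finite ground set of nodes and $\Pi$ is a multiset of finite sequences of nodes (paths), each containing each node at most once. Its size is $\|S\|=\sum_{\pi\in\Pi}|\pi|$ ($|\pi|$ = number of nodes). Write $x<_\pi y$ if $x,y\in\pi$ and $x$ strictly precedes $y$ in $\pi$. A $b$-bridge consists of $b$ distinct nodes $v_1,\dots,v_b$ and $b$ distinct paths $\pi_1,\dots,\pi_b$ with $v_i<_{\pi_i}v_{i+1}$ for $1\le i\le b-1$ and $v_1<_{\pi_b}v_b$; $\pi_b$ is the river and the others are arcs. An ordered path system is a path system with a total order on its paths; an ordered bridge is a bridge whose river comes after all of its arcs in this order. The ordered bridge girth is the least $b$ such that there is an ordered $b$-bridge ($\infty$ if none). $\beta^*(n,p,k)$ is the maximum possible size of an ordered path system with $n$ nodes, $p$ paths and ordered bridge girth $>k$. *)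

(* Defs.v *)
From mathcomp Require Import all_boot.
From Stdlib Require Import Reals.
Set Implicit Arguments. Unset Strict Implicit. Unset Printing Implicit Defensive.

(* An ordered path system on the node set 'I_n: a list of paths (the list
   order is the total order on paths; the list is a multiset of paths). *)
Definition path_system (n : nat) (P : seq (seq 'I_n)) : Prop :=
  all uniq P.

Definition ps_size (n : nat) (P : seq (seq 'I_n)) : nat :=
  sumn (map size P).

Definition prec (n : nat) (pi : seq 'I_n) (x y : 'I_n) : bool :=
  [&& x \in pi, y \in pi & index x pi < index y pi].

(* An ordered b-bridge (0-based indices): nodes v 0, ..., v (b-1) distinct,
   paths (given by their positions w i in the list P) w 0, ..., w (b-1)
   distinct, with v i <_{P_(w i)} v (i+1) for i < b-1 and
   v 0 <_{P_(w (b-1))} v (b-1); the river w (b-1) comes after all arcs. *)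
Definition ordered_bridge (n : nat) (P : seq (seq 'I_n)) (b : nat)
    (v : nat -> 'I_n) (w : nat -> nat) : Prop :=
  (0 < b)%N /\
  {in [pred i | (i < b)%N] &, injective v} /\
  {in [pred i | (i < b)%N] &, injective w} /\
  (forall i, (i < b)%N -> (w i < size P)%N) /\
  (forall i, (i.+1 < b)%N -> prec (nth [::] P (w i)) (v i) (v i.+1)) /\
  prec (nth [::] P (w b.-1)) (v 0) (v b.-1) /\
  (forall i, (i < b.-1)%N -> (w i < w b.-1)%N).

(* ordered bridge girth = infinity, i.e. > every k *)
Definition no_ordered_bridge (n : nat) (P : seq (seq 'I_n)) : Prop :=
  ~ exists b v w, @ordered_bridge n P b v w.

(* Main.v *)
Require Import Defs.
From mathcomp Require Import all_boot zify.
From Stdlib Require Import Reals Lra Lia.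
Set Implicit Arguments. Unset Strict Implicit.

Definition node (K a b x : nat) := x + K * (a * x + b).
Definition line (N K a b : nat) : seq 'I_N.+1 :=
  map (fun x => inord (node K a b x)) (iota 0 K).
Definition gridP (N K L p : nat) : seq (seq 'I_N.+1) :=
  mkseq (fun i => if i < K*L*L then line N K (i %/ (K*L)) (i %% (K*L)) else [::]) p.

Lemma node_lt K L N a b x : a < L -> b < K*L -> x < K -> 2*K*K*L <= N.+1 ->
  node K a b x < N.+1.
Proof. rewrite /node => Ha Hb Hx HN.
have H1 : a * x + b < 2 * K * L by nia.
have H2 : K * (a * x + b) <= K * (2*K*L - 1) by apply: leq_mul => //; lia.
nia. Qed.

Lemma XY K a b x : x < K -> node K a b x %% K = x /\ node K a b x %/ K = a*x+b.
Proof. move=> Hx; have K0 : 0 < K by lia.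
rewrite /node addnC mulnC; split.
- by rewrite modnMDl modn_small.
- by rewrite divnMDl // divn_small // addn0.
Qed.

Lemma mem_line N K a b u : (forall x, x < K -> node K a b x < N.+1) ->
  u \in line N K a b ->
  index u (line N K a b) < K /\ val u = node K a b (index u (line N K a b)).
Proof.
move=> Hlt Hu.
have Hi : index u (line N K a b) < K.
  by rewrite -index_mem /line size_map size_iota in Hu.
split => //.
have := nth_index u Hu.
rewrite {1}/line (nth_map 0) ?size_iota // nth_iota // add0n => E.
rewrite -[in LHS]E.
exact: inordK (Hlt _ Hi).
Qed.

Lemma uniq_line N K a b : (forall x, x < K -> node K a b x < N.+1) ->
  uniq (line N K a b).
Proof.
move=> Hlt; rewrite /line map_inj_in_uniq ?iota_uniq //.
move=> x y; rewrite !mem_iota !add0n => /andP[_ Hx] /andP[_ Hy] E.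
have := congr1 (@nat_of_ord N.+1) E; rewrite !inordK ?Hlt // => E2.
by have := (XY a b Hx).1; rewrite E2 (XY a b Hy).1.
Qed.

Lemma prec_line N K a b u v : (forall x, x < K -> node K a b x < N.+1) ->
  prec (line N K a b) u v ->
  [/\ val u %% K < val v %% K, val u %/ K = a * (val u %% K) + b
    & val v %/ K = a * (val v %% K) + b].
Proof.
move=> Hlt /and3P[Hu Hv Hi].
have [iu Eu] := mem_line Hlt Hu; have [iv Ev] := mem_line Hlt Hv.
have [X1 Y1] := XY a b iu; have [X2 Y2] := XY a b iv.
by rewrite Eu Ev X1 Y1 X2 Y2; split.
Qed.
Lemma prec_grid N K L p j u v : 0 < K -> 0 < L -> 2*K*K*L <= N.+1 ->
  prec (nth [::] (gridP N K L p) j) u v ->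
  [/\ j < K*L*L, val u %% K < val v %% K,
      val u %/ K = (j %/ (K*L)) * (val u %% K) + j %% (K*L)
    & val v %/ K = (j %/ (K*L)) * (val v %% K) + j %% (K*L)].
Proof.
move=> K0 L0 HN.
case: (ltnP j p) => Hjp; last by rewrite nth_default ?size_mkseq.
rewrite nth_mkseq //.
case: ifP => Hj //.
have Ha : j %/ (K*L) < L by rewrite ltn_divLR ?muln_gt0 ?K0 ?L0 //; lia.
have Hb : j %% (K*L) < K*L by rewrite ltn_pmod // muln_gt0 K0 L0.
move=> /(prec_line (fun x Hx => node_lt Ha Hb Hx HN)) [H1 H2 H3].
by split.
Qed.

Lemma step_le a aR x0 x1 y0 y1 c : a <= aR -> x0 < x1 -> y0 = a*x0+c -> y1 = a*x1+c ->
  y1 + aR*x0 <= y0 + aR*x1.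
Proof. move=> H1 H2 -> ->. nia. Qed.

Lemma step_lt a aR x0 x1 y0 y1 c : a < aR -> x0 < x1 -> y0 = a*x0+c -> y1 = a*x1+c ->
  y1 + aR*x0 < y0 + aR*x1.
Proof. move=> H1 H2 -> ->. nia. Qed.

Lemma grid_nobridge N K L p : 0 < K -> 0 < L -> 2*K*K*L <= N.+1 ->
  no_ordered_bridge (gridP N K L p).
Proof.
move=> K0 L0 HN [b [v [w [b0 [vinj [winj [wlt [arcs [river wR]]]]]]]]].
set R := w b.-1 in river wR.
have [_ HXR HYR0 HYR1] := prec_grid K0 L0 HN river.
have b2 : 1 < b.
  rewrite ltnNge; apply/negP => Hb1; have Hb : b.-1 = 0 by clear -Hb1; lia.
  by move: HXR; rewrite Hb ltnn.
set X := fun i => val (v i) %% K.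
set Y := fun i => val (v i) %/ K.
set aR := R %/ (K*L).
set cR := R %% (K*L).
have arc i : i.+1 < b -> exists a c, [/\ X i < X i.+1,
      Y i = a * X i + c, Y i.+1 = a * X i.+1 + c & a <= aR].
  move=> Hi; have [_ H1 H2 H3] := prec_grid K0 L0 HN (arcs i Hi).
  exists (w i %/ (K*L)), (w i %% (K*L)).
  split => //; apply: leq_div2r; apply: ltnW; apply: wR; clear -Hi; lia.
have [_ A1 A2 A3] := prec_grid K0 L0 HN (arcs 0 b2).
have Ha0 : w 0 %/ (K*L) <= aR by apply: leq_div2r; apply: ltnW; apply: wR; clear -b2; lia.
have W0 := wR 0 (ltac:(clear -b2; lia)).
have WE : w 0 <> R.
  move=> E; rewrite E in W0; by rewrite ltnn in W0.
have DE := divn_eq (w 0) (K*L).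
have DR := divn_eq R (K*L).
rewrite -/aR -/cR in DR.
have HY0 : Y 0 = aR * X 0 + cR by [].
have HY1 : Y b.-1 = aR * X b.-1 + cR by [].
change (Y 0 = w 0 %/ (K*L) * X 0 + w 0 %% (K*L)) in A2.
change (Y 1 = w 0 %/ (K*L) * X 1 + w 0 %% (K*L)) in A3.
change (is_true (X 0 < X 1)) in A1.
move: DE DR Ha0 A2 A3.
move: (w 0 %/ (K*L)) (w 0 %% (K*L)) => a0 c0 DE DR Ha0 A2 A3.
clearbody X Y aR cR.
case: (ltngtP a0 aR) Ha0 => // Ha _.
-
  have key : forall k, 0 < k -> k <= b.-1 -> Y k + aR * X 0 < Y 0 + aR * X k.
    elim=> [|k IH] // _ Hk.
    case: k IH Hk => [|k] IH Hk.
      exact: step_lt Ha A1 A2 A3.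
    have {}IH := IH isT (ltnW Hk).
    have [a [c [B1 B2 B3 B4]]] := arc k.+1 (ltac:(clear -Hk; lia)).
    have := step_le B4 B1 B2 B3. clear -IH; lia.
  have := key b.-1 (ltac:(clear -b2; lia)) (leqnn _).
  rewrite HY0 HY1; clear; lia.
- (* equal slopes: same line *)
  subst a0.
  have E : c0 = cR by move: A2; rewrite HY0; clear; lia.
  apply: WE; rewrite DE DR E; done.
Qed.

Lemma sumn_iota_ge (g : nat -> nat) c m p : m <= p -> (forall i, i < m -> c <= g i) ->
  m * c <= sumn (map g (iota 0 p)).
Proof.
elim: p m => [|p IH] m Hm Hg; first by move: Hm; rewrite leqn0 => /eqP ->.
rewrite -addn1 iotaD map_cat sumn_cat /= add0n addn0.
case: (ltngtP m p.+1) Hm => // Hm _.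
- by apply: leq_trans (IH m Hm Hg) (leq_addr _ _).
- rewrite Hm mulSn addnC; apply: leq_add.
    by apply: IH => // i Hi; apply: Hg; rewrite Hm ltnS ltnW.
  by apply: Hg; rewrite Hm.
Qed.

Lemma ps_size_mkseq n (f : nat -> seq 'I_n) p :
  ps_size (mkseq f p) = sumn (map (fun i => size (f i)) (iota 0 p)).
Proof. by rewrite /ps_size /mkseq -map_comp. Qed.

Definition trivP (N p : nat) : seq (seq 'I_N.+1) :=
  mkseq (fun i => if i == 0 then enum 'I_N.+1 else [:: ord0]) p.

Lemma prec_irr n (s : seq 'I_n) u : prec s u u = false.
Proof. by rewrite /prec ltnn !andbF. Qed.

Lemma prec_triv N p j u v : prec (nth [::] (trivP N p) j) u v -> j = 0.
Proof.
case: (ltnP j p) => Hjp; last by rewrite nth_default ?size_mkseq.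
rewrite nth_mkseq //; case: eqP => // _.
rewrite /prec !mem_seq1 => /and3P[/eqP -> /eqP ->].
by rewrite ltnn.
Qed.

Lemma triv_nobridge N p : no_ordered_bridge (trivP N p).
Proof.
move=> [b [v [w [b0 [vinj [winj [wlt [arcs [river wR]]]]]]]]].
case: (ltnP 1 b) => Hb.
- have := wR 0 (ltac:(clear -Hb; lia)).
  by rewrite (prec_triv (arcs 0 Hb)) (prec_triv river).
- have Hb1 : b.-1 = 0 by clear -Hb; lia.
  by move: river; rewrite Hb1 prec_irr.
Qed.

Lemma triv_ok N p : 0 < p ->
  [/\ size (trivP N p) = p, path_system (trivP N p), no_ordered_bridge (trivP N p),
      N.+1 <= ps_size (trivP N p) & p <= ps_size (trivP N p)].
Proof.
move=> p0; split.
- exact: size_mkseq.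
- apply/allP => s /mapP [i _ ->]; case: ifP => _ //; exact: enum_uniq.
- exact: triv_nobridge.
- rewrite ps_size_mkseq; case: p p0 => // p _ /=.
  by rewrite size_enum_ord leq_addr.
- rewrite ps_size_mkseq; rewrite -[X in X <= _]muln1.
  apply: sumn_iota_ge => // i _; case: ifP => _ //.
  by rewrite size_enum_ord.
Qed.

Lemma grid_ok N K L p : 0 < K -> 0 < L -> 2*K*K*L <= N.+1 -> K*L*L <= p ->
  [/\ size (gridP N K L p) = p, path_system (gridP N K L p),
      no_ordered_bridge (gridP N K L p) & K*L*L*K <= ps_size (gridP N K L p)].
Proof.
move=> K0 L0 HN Hp.
have Hab i : i < K*L*L -> i %/ (K*L) < L /\ i %% (K*L) < K*L.
  move=> Hi; split; first by rewrite ltn_divLR ?muln_gt0 ?K0 ?L0 //; clear -Hi; lia.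
  by rewrite ltn_pmod // muln_gt0 K0 L0.
split.
- exact: size_mkseq.
- apply/allP => s /mapP [i _ ->]; case: ifP => Hi //.
  have [Ha Hb] := Hab i Hi.
  exact: uniq_line (fun x Hx => node_lt Ha Hb Hx HN).
- exact: grid_nobridge.
- rewrite ps_size_mkseq; apply: sumn_iota_ge => // i Hi.
  by rewrite Hi /line size_map size_iota.
Qed.

Lemma cube_root c N : 0 < c -> exists k, k*k*k*c <= N < k.+1*k.+1*k.+1*c.
Proof.
move=> c0; elim: N => [|N [k /andP[H1 H2]]]; first by exists 0; rewrite /= !mul1n c0.
case: (ltnP N.+1 (k.+1*k.+1*k.+1*c)) => H3.
- by exists k; rewrite H3 andbT; apply: leq_trans H1 _.
- exists k.+1; apply/andP; split => //.
  have E : N.+1 = k.+1*k.+1*k.+1*c by apply/eqP; rewrite eqn_leq H3 H2.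
  rewrite E ltn_pmul2r //; apply: ltn_mul; [apply: ltn_mul|] => //.
Qed.

Lemma cube_mono a b : a*a*a <= b*b*b -> a <= b.
Proof.
move=> H; rewrite leqNgt; apply/negP => Hba.
have : b*b*b < a*a*a by apply: ltn_mul => //; apply: ltn_mul.
by rewrite ltnNge H.
Qed.

Definition Mc := 64*64*64.

Lemma main_nat N p : 0 < p -> exists P : seq (seq 'I_N.+1),
  [/\ size P = p, path_system P, no_ordered_bridge P &
   [/\ N.+1*N.+1*N.+1 <= Mc * (ps_size P * ps_size P * ps_size P),
       p*p*p <= Mc * (ps_size P * ps_size P * ps_size P) &
       (N.+1*p)*(N.+1*p) <= Mc * (ps_size P * ps_size P * ps_size P)]].
Proof.
move=> p0; set n := N.+1; have n0 : 0 < n by [].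
case: (leqP (p*p) (2*n)) => Hpn; last case: (leqP (n*n) (2*p)) => Hnp.
- have [H1 H2 H3 H4 H5] := triv_ok N p0.
  exists (trivP N p); split => //; move: (ps_size _) H4 H5 => S H4 H5.
  have n3 : n*n*n <= S*S*S by rewrite !leq_mul.
  have p3 : p*p*p <= S*S*S by rewrite !leq_mul.
  split; rewrite /Mc.
  + clear -n3; nia.
  + clear -p3; nia.
  + have : (n*p)*(n*p) <= 2 * (n*n*n) by clear -Hpn; nia.
    clear -n3; nia.
- have [H1 H2 H3 H4 H5] := triv_ok N p0.
  exists (trivP N p); split => //; move: (ps_size _) H4 H5 => S H4 H5.
  have n3 : n*n*n <= S*S*S by rewrite !leq_mul.
  have p3 : p*p*p <= S*S*S by rewrite !leq_mul.
  split; rewrite /Mc.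
  + clear -n3; nia.
  + clear -p3; nia.
  + have : (n*p)*(n*p) <= 2 * (p*p*p) by clear -Hnp; nia.
    clear -p3; nia.
- have [K /andP[K1 K2]] := cube_root (n*n) (ltac:(clear -p0; lia) : 0 < 2*p).
  have [L /andP[L1 L2]] := cube_root (p*p) (ltac:(clear -n0; lia) : 0 < 2*n).
  have K0 : 0 < K.
    case: K K1 K2 => // _; rewrite !mul1n => K2.
    by move: Hnp; rewrite ltnNge ltnW.
  have L0 : 0 < L.
    case: L L1 L2 => // _; rewrite !mul1n => L2.
    by move: Hpn; rewrite ltnNge ltnW.
  have C1 : (2*K*K*L)*(2*K*K*L)*(2*K*K*L) <= n*n*n.
    have h := leq_mul (leq_mul K1 K1) L1.
    have e1 : (K*K*K*(2*p))*(K*K*K*(2*p))*(L*L*L*(2*n))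
       = ((2*K*K*L)*(2*K*K*L)*(2*K*K*L)) * (p*p*n) by clear; nia.
    have e2 : n*n*(n*n)*(p*p) = (n*n*n)*(p*p*n) by clear; nia.
    rewrite e1 e2 leq_pmul2r in h => //; clear -p0 n0; nia.
  have C2 : (2*K*L*L)*(2*K*L*L)*(2*K*L*L) <= p*p*p.
    have h := leq_mul (leq_mul L1 L1) K1.
    have e1 : (L*L*L*(2*n))*(L*L*L*(2*n))*(K*K*K*(2*p))
       = ((2*K*L*L)*(2*K*L*L)*(2*K*L*L)) * (n*n*p) by clear; nia.
    have e2 : p*p*(p*p)*(n*n) = (p*p*p)*(n*n*p) by clear; nia.
    rewrite e1 e2 leq_pmul2r in h => //; clear -p0 n0; nia.
  have HN : 2*K*K*L <= n := cube_mono C1.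
  have Hp : K*L*L <= p.
    have := cube_mono C2; clear; nia.
  have [H1 H2 H3 H4] := grid_ok K0 L0 HN Hp.
  exists (gridP N K L p); split => //; move: (ps_size _) H4 => S H4.
  have h := ltn_mul K2 L2.
  have e1 : K.+1 * K.+1 * K.+1 * (2 * p) * (L.+1 * L.+1 * L.+1 * (2 * n))
     = (4 * ((K.+1*L.+1)*(K.+1*L.+1)*(K.+1*L.+1))) * (n*p) by clear; nia.
  have e2 : n * n * (p * p) = (n*p)*(n*p) by clear; nia.
  rewrite e1 e2 ltn_pmul2r in h; last by rewrite muln_gt0 n0 p0.
  have hKL : K.+1*L.+1 <= 4*(K*L) by clear -K0 L0; nia.
  have h2 : n*p <= 256 * ((K*L)*(K*L)*(K*L)).
    have := leq_mul (leq_mul hKL hKL) hKL; clear -h; nia.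
  have h3 : (K*L)*(K*L)*(K*L)*((K*L)*(K*L)*(K*L)) <= S*S*S.
    have hs : (K*L)*(K*L) <= S by move: H4; clear; nia.
    have := leq_mul (leq_mul hs hs) hs; clear; nia.
  have h4 : (n*p)*(n*p) <= Mc * (S*S*S).
    have := leq_mul h2 h2; rewrite /Mc; clear -h3; nia.
  split => //.
  + apply: leq_trans h4; clear -Hpn; nia.
  + apply: leq_trans h4; clear -Hnp; nia.
Qed.

Open Scope R_scope.

Lemma Rcube_mono x y : 0 <= x -> 0 <= y -> x*x*x <= (y*y*y) -> x <= y.
Proof.
intros Hx Hy H; destruct (Rle_lt_dec x y) as [h|h]; auto.
exfalso.
assert (y*y <= x*x) by (apply Rmult_le_compat; lra).
assert (y*y*y < x*x*x).
{ apply Rle_lt_trans with (x*x*y). apply Rmult_le_compat_r; lra.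
  apply Rmult_lt_compat_l; [nra|lra]. }
lra.
Qed.

Lemma Rpower23 x : 0 < x -> Rpower x (2/3) * Rpower x (2/3) * Rpower x (2/3) = x * x.
Proof.
intros Hx. rewrite <- !Rpower_plus.
replace (2/3 + 2/3 + 2/3) with (INR 2) by (simpl; lra).
rewrite Rpower_pow; auto. simpl; ring.
Qed.

Lemma nat_to_R (a b : nat) : is_true (leq a b) -> INR a <= INR b.
Proof. intros H; apply le_INR; apply/leP; exact H. Qed.

Lemma INR_muln (a b : nat) : INR (muln a b) = INR a * INR b.
Proof. exact: mult_INR. Qed.

Close Scope R_scope.

Theorem theorem3p19 :
  exists c : R, (0 < c)%R /\
    forall n p : nat, (0 < n)%N -> (0 < p)%N ->
      exists P : seq (seq 'I_n),
        [/\ size P = p, path_system P, no_ordered_bridge P &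
            (c * (Rpower (INR n) (2/3) * Rpower (INR p) (2/3) + INR n + INR p)
               <= INR (ps_size P))%R].
Proof.
Open Scope R_scope.
exists (1/192); split; [lra|].
intros n p n0 p0.
destruct n as [|N]; [discriminate|].
destruct (main_nat N p0) as [P [H1 H2 H3 [B1 B2 B3]]].
exists P; split; auto.
apply nat_to_R in B1, B2, B3.
rewrite !INR_muln in B1, B2, B3.
unfold Mc in B1, B2, B3. rewrite ?INR_muln in B1, B2, B3.
set S := INR (ps_size P) in B1 B2 B3 *.
set n := INR N.+1 in B1 B2 B3 *.
set q := INR p in B1 B2 B3 *.
replace (INR 64) with 64 in * by (simpl; lra).
assert (Hn : 0 < n) by (apply lt_0_INR; apply/ltP; auto).
assert (Hq : 0 < q) by (apply lt_0_INR; apply/ltP; auto).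
assert (HS : 0 <= S) by apply pos_INR.
assert (Bn : n <= 64 * S).
{ apply Rcube_mono; [lra|lra|]. nra. }
assert (Bq : q <= 64 * S).
{ apply Rcube_mono; [lra|lra|]. nra. }
set A := Rpower n (2/3) * Rpower q (2/3).
assert (HA : 0 <= A).
{ unfold A, Rpower. pose proof (exp_pos (2/3 * ln n)); pose proof (exp_pos (2/3 * ln q)); nra. }
assert (A3 : A*A*A = (n*q)*(n*q)).
{ unfold A. replace ((n*q)*(n*q)) with ((n*n)*(q*q)) by ring. rewrite <- (Rpower23 Hn), <- (Rpower23 Hq). ring. }
assert (BA : A <= 64 * S).
{ apply Rcube_mono; [lra|lra|]. rewrite A3. nra. }
lra.
Qed.
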